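(* Let $T$ be a pre-truss and let $P$ be a paragon in $T$. Then $P$ is a completely prime paragon if and only if the quotient pre-truss $T/P$ is a domain.
   Context: A heap is a set with a ternary operation $[-,-,-]$ satisfying $[a_1,a_2,[a_3,a_4,a_5]]=[[a_1,a_2,a_3],a_4,a_5]$ and $[a,a,b]=b=[b,a,a]$. A normal sub-heap of $H$ is a non-empty subset $S$ closed under $[-,-,-]$ with $[[a,e,s],a,e]\in S$ for all $a\in H$, $e,s\in S$; $a\sim_S b$ iff $[a,b,s]\in S$ for some (equivalently all) $s\in S$. A pre-truss is a heap with an associative binary operation (juxtaposition). A sub-heap $S$ is closed if $[ts',ts,s]\in S$ and $[s't,st,s]\in S$ for all $s,s'\in S$, $t\in T$. A paragon is a non-empty normal sub-heap $P$ all of whose $\sim_P$-classes are closed sub-heaps; $T/P$ is then a pre-truss with $\bar a\bar b=\overline{ab}$. An ideal is a normal sub-heap $I$ with $ti\in I$ and $it\in I$ for all $t\in T$, $i\in I$. An element $a$ is an absorber if $ta=a=at$ for all $t$; it is unique if it exists, and $T^{\mathrm{Abs}}$ denotes $T$ minus its absorber (or $T$ itself if there is none). An element $a\in T^{\mathrm{Abs}}$ is regular if for all $b\neq c$ in $T$, $ab\neq ac$ and $ba\neq ca$. A pre-truss is a domain if all elements of $T^{\mathrm{Abs}}$ are regular. For $p\in P$, $a\in T$ write $P_p^a=\{[q,p,a]\mid q\in P\}$. A non-empty paragon $P$ is completely prime if for all $p\in P$ and $a,b,c\in T$: $[ab,ac,p]\in P$ implies that $P_p^a$ is an ideal or $[b,c,p]\in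 P$; and $[ba,ca,p]\in P$ implies that $P_p^a$ is an ideal or $[b,c,p]\in P$. *)

(* Defs.v *)
Set Implicit Arguments.

Record PreTruss := {
  carrier :> Type;
  br : carrier -> carrier -> carrier -> carrier;
  mul : carrier -> carrier -> carrier;
  br_assoc : forall a1 a2 a3 a4 a5,
      br a1 a2 (br a3 a4 a5) = br (br a1 a2 a3) a4 a5;
  br_mal_l : forall a b, br a a b = b;
  br_mal_r : forall a b, br b a a = b;
  mul_assoc : forall a b c, mul a (mul b c) = mul (mul a b) c
}.

Arguments br {p} _ _ _.
Arguments mul {p} _ _.

Section Defs.
Context {T : PreTruss}.

Definition sub_heap (S : T -> Prop) : Prop :=
  forall a b c, S a -> S b -> S c -> S (br a b c).

Definition normal_sub_heap (S : T -> Prop) : Prop :=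
  (exists s, S s) /\ sub_heap S /\
  (forall a e s, S e -> S s -> S (br (br a e s) a e)).

Definition sim (S : T -> Prop) (a b : T) : Prop :=
  exists s, S s /\ S (br a b s).

Definition closed_sub_heap (S : T -> Prop) : Prop :=
  sub_heap S /\
  (forall s s' t, S s -> S s' ->
     S (br (mul t s') (mul t s) s) /\ S (br (mul s' t) (mul s t) s)).

Definition paragon (P : T -> Prop) : Prop :=
  normal_sub_heap P /\ (forall a, closed_sub_heap (fun x => sim P x a)).

Definition ideal (I : T -> Prop) : Prop :=
  normal_sub_heap I /\ (forall t i, I i -> I (mul t i) /\ I (mul i t)).

Definition Ppa (P : T -> Prop) (p a : T) : T -> Prop :=
  fun x => exists q, P q /\ x = br q p a.

Definition completely_prime (P : T -> Prop) : Prop :=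
  paragon P /\ (exists p, P p) /\
  (forall p a b c, P p ->
     (P (br (mul a b) (mul a c) p) -> ideal (Ppa P p a) \/ P (br b c p)) /\
     (P (br (mul b a) (mul c a) p) -> ideal (Ppa P p a) \/ P (br b c p))).

(** Domain property of the pre-truss T/E, where E is a congruence on T
    (equality in the quotient is E; multiplication is induced from T).
    With E := eq this is the domain property of T itself. *)
Definition is_absorber_mod (E : T -> T -> Prop) (a : T) : Prop :=
  forall t, E (mul t a) a /\ E (mul a t) a.

Definition regular_mod (E : T -> T -> Prop) (a : T) : Prop :=
  forall b c, ~ E b c -> ~ E (mul a b) (mul a c) /\ ~ E (mul b a) (mul c a).

Definition domain_mod (E : T -> T -> Prop) : Prop :=
  forall a, ~ is_absorber_mod E a -> regular_mod E a.

Definition domain : Prop := @domain_mod (@eq T).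

(** T/P is a domain: the quotient pre-truss T/P has as elements the
    ~_P classes, with [a],[b] product [ab]; we express its domain property
    on representatives. *)
Definition quotient_domain (P : T -> Prop) : Prop := domain_mod (sim P).

End Defs.

(* Main.v *)
Require Import Defs.
From Stdlib Require Import Classical.
Set Implicit Arguments.

Lemma brM (T : PreTruss) (a b c d e : T) :
  br a (br b c d) e = br (br a d c) b e.
Proof.
  transitivity (br (br (br a d c) b (br b c d)) (br b c d) e).
  - f_equal. rewrite br_assoc, br_mal_r, <- br_assoc, br_mal_l, br_mal_r.
    reflexivity.
  - rewrite <- br_assoc, br_mal_l. reflexivity.
Qed.

Section S.
Context {T : PreTruss}.

Lemma simP_all (P : T -> Prop) (HN : normal_sub_heap P) a b :
  sim P a b -> forall p, P p -> P (br a b p).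
Proof.
  intros [s [Hs H]] p Hp. destruct HN as [_ [Hsub _]].
  replace (br a b p) with (br (br a b s) s p).
  - apply Hsub; auto.
  - rewrite <- br_assoc, br_mal_l. reflexivity.
Qed.

Lemma sim_refl (P : T -> Prop) (HN : normal_sub_heap P) a : sim P a a.
Proof.
  destruct HN as [[s Hs] _]. exists s. rewrite br_mal_l. auto.
Qed.

Lemma sim_sym (P : T -> Prop) (HN : normal_sub_heap P) a b :
  sim P a b -> sim P b a.
Proof.
  intros [p [Hp H]]. exists p. split; auto.
  replace (br b a p) with (br p (br a b p) p).
  - destruct HN as [_ [Hsub _]]. apply Hsub; auto.
  - rewrite brM, br_mal_l. reflexivity.
Qed.

Lemma sim_trans (P : T -> Prop) (HN : normal_sub_heap P) a b c :
  sim P a b -> sim P b c -> sim P a c.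
Proof.
  intros [p [Hp H]] H2. pose proof (simP_all HN H2 _ Hp) as H3.
  exists p. split; auto.
  replace (br a c p) with (br (br a b p) p (br b c p)).
  - destruct HN as [_ [Hsub _]]. apply Hsub; auto.
  - rewrite <- br_assoc, br_mal_l, br_assoc, br_mal_r. reflexivity.
Qed.

Lemma cong1 (P : T -> Prop) (HN : normal_sub_heap P) x x' y z :
  sim P x x' -> sim P (br x y z) (br x' y z).
Proof.
  intros [p [Hp H]]. exists p. split; auto.
  rewrite brM, <- (@br_assoc _ x y z z y), br_mal_l, br_mal_r. exact H.
Qed.

Lemma cong3 (P : T -> Prop) (HN : normal_sub_heap P) x y z z' :
  sim P z z' -> sim P (br x y z) (br x y z').
Proof.
  intros [p [Hp H]]. exists p. split; auto.
  destruct HN as [_ [Hsub Hn]].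
  pose proof (Hn (br x y p) p (br z z' p) Hp H) as K.
  replace (br (br x y z) (br x y z') p)
    with (br (br (br x y p) p (br z z' p)) (br x y p) p); auto.
  rewrite <- (@br_assoc _ x y p p), br_mal_l, br_assoc.
  rewrite <- br_assoc, brM, br_mal_l.
  rewrite brM, br_assoc. reflexivity.
Qed.

Lemma cong2 (P : T -> Prop) (HN : normal_sub_heap P) x y y' z :
  sim P y y' -> sim P (br x y z) (br x y' z).
Proof.
  intros H.
  replace (br x y z) with (br x y' (br y' y z)).
  - apply cong3; auto.
    pose proof (cong1 HN y z (sim_sym HN H)) as K. rewrite br_mal_l in K. exact K.
  - rewrite br_assoc, br_mal_r. reflexivity.
Qed.

Lemma cong (P : T -> Prop) (HN : normal_sub_heap P) x x' y y' z z' :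
  sim P x x' -> sim P y y' -> sim P z z' -> sim P (br x y z) (br x' y' z').
Proof.
  intros H1 H2 H3.
  apply sim_trans with (br x' y z); auto using cong1.
  apply sim_trans with (br x' y' z); auto using cong2, cong3.
Qed.

Lemma mul_congL (P : T -> Prop) (HP : paragon P) t x y :
  sim P x y -> sim P (mul t x) (mul t y).
Proof.
  intros H. destruct HP as [HN Hc].
  destruct (Hc y) as [_ Hc2].
  destruct (Hc2 y x t (sim_refl HN y) H) as [K _].
  pose proof (cong1 HN y (mul t y) K) as K2.
  rewrite <- br_assoc, !br_mal_l, br_mal_r in K2. exact K2.
Qed.

Lemma mul_congR (P : T -> Prop) (HP : paragon P) t x y :
  sim P x y -> sim P (mul x t) (mul y t).
Proof.
  intros H. destruct HP as [HN Hc].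
  destruct (Hc y) as [_ Hc2].
  destruct (Hc2 y x t (sim_refl HN y) H) as [_ K].
  pose proof (cong1 HN y (mul y t) K) as K2.
  rewrite <- br_assoc, !br_mal_l, br_mal_r in K2. exact K2.
Qed.

Lemma Ppa_iff (P : T -> Prop) (HN : normal_sub_heap P) p a x :
  P p -> (Ppa P p a x <-> sim P x a).
Proof.
  intros Hp. split.
  - intros [q [Hq ->]]. exists p. split; auto.
    rewrite <- br_assoc, br_mal_l, br_mal_r. exact Hq.
  - intros H. exists (br x a p). split.
    + apply simP_all; auto.
    + rewrite <- br_assoc, br_mal_l, br_mal_r. reflexivity.
Qed.

End S.
Unset Implicit Arguments.

Theorem theorem4p10 (T : PreTruss) (P : T -> Prop) (HP : paragon P) :
  completely_prime P <-> quotient_domain P.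
Proof.
  pose proof (proj1 HP) as HN.
  assert (Hne : exists s, P s) by apply (proj1 HN). destruct Hne as [p0 Hp0].
  split.
  - intros [_ [_ H]] a Hna b c Hbc.
    assert (Hab : forall (X : Prop), (X -> ideal (Ppa P p0 a) \/ P (br b c p0)) -> ~ X).
    { intros X HX Hx. destruct (HX Hx) as [Hi | Hb].
      - apply Hna. intros t. destruct Hi as [_ Hi].
        assert (Ha : Ppa P p0 a a) by (exists p0; rewrite br_mal_l; auto).
        destruct (Hi t a Ha) as [H1 H2].
        split; apply (Ppa_iff HN _ a _ Hp0); auto.
      - apply Hbc. exists p0. auto. }
    destruct (H p0 a b c Hp0) as [H1 H2].
    split; intro Hs; [apply (Hab _ H1) | apply (Hab _ H2)]; apply simP_all; auto.
  - intros HD. split; [exact HP | split; [exists p0; exact Hp0 |]].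
    intros p a b c Hp.
    assert (Main : sim P b c \/ ~ sim P b c) by apply classic.
    destruct (classic (is_absorber_mod (sim P) a)) as [Ha | Ha].
    + assert (Hi : ideal (Ppa P p a)).
      { split.
        - split; [exists a; exists p; rewrite br_mal_l; auto | split].
          + intros x y z Hx Hy Hz.
            apply (Ppa_iff HN _ a _ Hp) in Hx, Hy, Hz. apply (Ppa_iff HN _ a _ Hp).
            pose proof (cong HN Hx Hy Hz) as K. rewrite br_mal_l in K. exact K.
          + intros x e s He Hs.
            apply (Ppa_iff HN _ a _ Hp) in He, Hs. apply (Ppa_iff HN _ a _ Hp).
            pose proof (cong HN (cong HN (sim_refl HN x) He Hs) (sim_refl HN x) He) as K.
            rewrite br_mal_r, br_mal_l in K. exact K.
        - intros t i Hi. apply (Ppa_iff HN _ a _ Hp) in Hi.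
          split; apply (Ppa_iff HN _ a _ Hp).
          + eapply sim_trans; [exact HN | apply mul_congL; eauto | apply Ha].
          + eapply sim_trans; [exact HN | apply mul_congR; eauto | apply Ha]. }
      split; intros _; left; exact Hi.
    + destruct Main as [Hbc | Hbc].
      * split; intros _; right; apply simP_all; auto.
      * destruct (HD a Ha b c Hbc) as [H1 H2].
        split; intro H; exfalso; [apply H1 | apply H2]; exists p; auto.
Qed.
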